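(* Let $H$ be a finite simple graph on vertex set $\{x_1,\dots,x_n\}$ and $G=w(H)$, a graph on $2n$ vertices, and suppose $|E(G)|\ge n+1$. Let $\mathbb{K}$ be a field of characteristic $0$, let $A=A(G)$ be the Artinian algebra of $G$ over $\mathbb{K}$, and let $\ell=x_1+\dots+x_n+y_1+\dots+y_n$ be the sum of the variables. Then the multiplication map $\times\ell:A_i\to A_{i+1}$ has maximal rank (i.e. rank $\min\{\dim_{\mathbb{K}}A_i,\dim_{\mathbb{K}}A_{i+1}\}$) for every $i<n/2$ and for $i=n-1$; moreover for $i<n/2$ the map is injective.
   Context: For a graph $H$ with vertex set $\{x_1,\dots,x_n\}$, the whiskered graph $w(H)$ has vertex set $\{x_1,\dots,x_n,y_1,\dots,y_n\}$ and edge set $E(H)\cup\{\{x_i,y_i\}: i=1,\dots,n\}$. For a graph $G$ on vertices $z_1,\dots,z_m$, its Artinian algebra over $\mathbb{K}$ is $A(G)=\mathbb{K}[z_1,\dots,z_m]/(\langle z_1^2,\dots,z_m^2\rangle+I(G))$, where $I(G)=\langle z_iz_j:\{z_i,z_j\}\in E(G)\rangle$ is the edge ideal; it is standard graded, $A=\bigoplus_i A_i$. *)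

(* Defs.v *)
From HB Require Import structures.
From mathcomp Require Import all_boot all_order all_algebra.
From mathcomp Require Import mpoly.
Set Implicit Arguments. Unset Strict Implicit. Unset Printing Implicit Defensive.
Import GRing.Theory.
Local Open Scope ring_scope.

(* Whiskered graph w(H): vertices 'I_(n + n); vertex lshift n i is x_i,
   vertex rshift n i is y_i. *)
Definition whisker (n : nat) (H : rel 'I_n) : rel 'I_(n + n) :=
  fun u v =>
    match split u, split v with
    | inl i, inl j => H i j
    | inl i, inr j => i == j
    | inr i, inl j => i == j
    | inr _, inr _ => false
    end.

Definition edge_count (m : nat) (G : rel 'I_m) : nat :=
  #|[set e : 'I_m * 'I_m | (e.1 < e.2)%N && G e.1 e.2]|.

(* Membership in the ideal <z_1^2,...,z_m^2> + I(G) of K[z_1,...,z_m]: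
   p is a polynomial combination of the generators z_u z_v with u = v or
   {u,v} an edge of G. *)
Definition in_ideal (K : fieldType) (m : nat) (G : rel 'I_m)
    (p : {mpoly K[m]}) : Prop :=
  exists c : 'I_m -> 'I_m -> {mpoly K[m]},
    p = \sum_(u < m) \sum_(v < m | (u == v) || G u v) c u v * ('X_u * 'X_v).

Definition ell (K : fieldType) (m : nat) : {mpoly K[m]} := \sum_(u < m) 'X_u.

(* A(G)_i is represented by homogeneous polynomials of degree i modulo the
   (homogeneous) ideal.  The map  x ell : A_i -> A_(i+1)  is injective /
   surjective: *)
Definition mult_injective (K : fieldType) (m : nat) (G : rel 'I_m) (i : nat)
  : Prop :=
  forall f : {mpoly K[m]}, f \is i.-homog ->
    in_ideal G (ell K m * f) -> in_ideal G f.

Definition mult_surjective (K : fieldType) (m : nat) (G : rel 'I_m) (i : nat)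
  : Prop :=
  forall g : {mpoly K[m]}, g \is i.+1.-homog ->
    exists f : {mpoly K[m]}, f \is i.-homog /\ in_ideal G (g - ell K m * f).

(* maximal rank (rank = min(dim A_i, dim A_(i+1))) of a linear map between
   finite-dimensional spaces = injective or surjective *)
Definition maximal_rank (K : fieldType) (m : nat) (G : rel 'I_m) (i : nat)
  : Prop :=
  mult_injective K G i \/ mult_surjective K G i.

(* Main.v *)
Require Import Defs.
From HB Require Import structures.
From mathcomp Require Import all_boot all_order all_algebra.
From mathcomp Require Import mpoly.
From mathcomp Require Import zify ring.
Set Implicit Arguments. Unset Strict Implicit. Unset Printing Implicit Defensive.
Import GRing.Theory.
Local Open Scope ring_scope.

Section Bool.
Variable (K : fieldType) (T : finType).
Hypothesis K0 : [pchar K] =i pred0.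

Lemma natr_neq0 (j : nat) : (j.+1)%:R != 0 :> K.
Proof. by have /pcharf0P -> := K0. Qed.

Lemma mulrn_S_eq0 (x : K) j : x *+ j.+1 = 0 -> x = 0.
Proof.
move=> h; apply/eqP; move: h; rewrite -mulr_natr => /eqP.
by rewrite mulf_eq0 (negbTE (natr_neq0 j)) orbF.
Qed.

Lemma ex_subset (D : {set T}) j : (j <= #|D|)%N -> exists C : {set T}, C \subset D /\ #|C| = j.
Proof.
elim: j => [|j IH] hj; first by exists set0; rewrite sub0set cards0.
have [C [sC cC]] := IH (ltnW hj).
have: (0 < #|D :\: C|)%N by rewrite cardsD (setIidPr sC) subn_gt0 cC.
case/card_gt0P => x; rewrite inE => /andP [xC xD].
exists (x |: C); split; first by rewrite subUset sub1set xD sC.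
by rewrite cardsU1 xC cC.
Qed.

Lemma sub_U1 (d : T) (A B : {set T}) : d \notin A -> (A \subset d |: B) = (A \subset B).
Proof.
move=> dA; apply/subsetP/subsetP => s x xA; move: (s x xA); rewrite ?inE.
- by case/orP => // /eqP ex; move: xA; rewrite ex (negbTE dA).
- by move=> ->; rewrite orbT.
Qed.

Lemma sum_split_pt (F : {set T} -> K) (d : T) (B : {set T}) (k : nat) : d \notin B ->
  \sum_(A : {set T} | (A \subset d |: B) && (#|A| == k.+1)) F A =
  \sum_(A : {set T} | (A \subset B) && (#|A| == k)) F (d |: A) +
  \sum_(A : {set T} | (A \subset B) && (#|A| == k.+1)) F A.
Proof.
move=> dB.
rewrite (bigID (fun A : {set T} => d \in A)) /=; congr (_ + _); last first.
  apply: eq_bigl => A; case dA: (d \in A) => /=.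
    rewrite andbF; symmetry; apply/negbTE; apply/negP => /andP[/subsetP s _].
    by move: (s d dA); rewrite (negbTE dB).
  by rewrite andbT sub_U1 ?dA.
rewrite (reindex_onto (fun A => d |: A) (fun A => A :\ d)) /=; last first.
  by move=> A /andP [_ dA]; rewrite setD1K.
apply: eq_bigl => A; case dA: (d \in A) => /=.
  have -> : ((d |: A) :\ d == A) = false.
    apply/negbTE/eqP => /setP /(_ d); rewrite !inE eqxx dA //.
  rewrite !andbF; symmetry; apply/negbTE; apply/negP => /andP[/subsetP s _].
  by move: (s d dA); rewrite (negbTE dB).
rewrite setU1K ?dA // eqxx cardsU1 dA setU11 /= !andbT add1n eqSS.
by rewrite subUset sub1set setU11 /= sub_U1 ?dA.
Qed.

Lemma dcount (F : {set T} -> K) (E : {set T}) (k : nat) :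
  \sum_(e in E) \sum_(A : {set T} | (A \subset E :\ e) && (#|A| == k)) F A =
  (\sum_(A : {set T} | (A \subset E) && (#|A| == k)) F A) *+ (#|E| - k).
Proof.
rewrite (eq_bigr (fun e => \sum_(A : {set T} | (A \subset E) && (#|A| == k)) (if e \in A then 0 else F A))); last first.
  move=> e eE; rewrite [RHS]big_mkcond [LHS]big_mkcond; apply: eq_bigr => A _.
  by rewrite subsetD1; case: (A \subset E); case: (e \in A); case: (#|A| == k).
rewrite exchange_big /= -sumrMnl; apply: eq_bigr => A /andP [sAE /eqP cA].
rewrite (eq_bigr (fun e => if e \in E :\: A then F A else 0)); last first.
  by move=> e eE; rewrite inE eE andbT; case: (e \in A).
rewrite -big_mkcondr /= (eq_bigl (fun e => e \in E :\: A)); last first.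
  by move=> e; rewrite !inE; case: (e \in E); rewrite ?andbF ?andbT.
by rewrite sumr_const cardsD (setIidPr sAE) cA.
Qed.

Lemma sum_del (F : {set T} -> K) (C : {set T}) (k : nat) : #|C| = k.+1 ->
  \sum_(v in C) F (C :\ v) = \sum_(A : {set T} | (A \subset C) && (#|A| == k)) F A.
Proof.
move=> cC.
rewrite -(big_imset F (h:=fun v => C :\ v)) /=; last first.
  move=> v1 v2 v1C v2C /setP /(_ v1); rewrite !inE eqxx v1C /= andbT.
  by move/esym/negbFE/eqP.
apply: eq_bigl => A; apply/imsetP/andP.
  case=> v vC ->; split; first exact: subD1set.
  by move: (cardsD1 v C); rewrite vC cC add1n => [[<-]].
case=> sAC /eqP cA.
have : #|C :\: A| == 1%N by rewrite cardsD (setIidPr sAC) cC cA subSnn.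
case/cards1P => x hx; exists x.
  by move: (set11 x); rewrite -hx inE => /andP [].
by rewrite -hx setDDr setDv set0U (setIidPr sAC).
Qed.

Lemma base_j0 (D : {set T}) k (b : {set T} -> K) :
  (forall C : {set T}, C \subset D -> #|C| = (k + 0)%N ->
     \sum_(A : {set T} | (A \subset C) && (#|A| == k)) b A = 0) ->
  forall A : {set T}, A \subset D -> #|A| = k -> b A = 0.
Proof.
move=> hC A sA cA; rewrite -(hC A sA) ?addn0 //.
rewrite (big_pred1 A) // => A0 /=; apply/idP/idP.
  by case/andP => s /eqP c; rewrite eqEcard s c cA leqnn.
by move/eqP ->; rewrite subxx cA eqxx.
Qed.

Lemma base_k0 (D : {set T}) j (b : {set T} -> K) :
  (j <= #|D|)%N ->
  (forall C : {set T}, C \subset D -> #|C| = (0 + j)%N ->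
     \sum_(A : {set T} | (A \subset C) && (#|A| == 0%N)) b A = 0) ->
  forall A : {set T}, A \subset D -> #|A| = 0%N -> b A = 0.
Proof.
move=> hj hC A sA /eqP; rewrite cards_eq0 => /eqP ->.
have [C [sC cC]] := ex_subset hj.
rewrite -(hC C sC cC) (big_pred1 set0) // => A0 /=.
by rewrite cards_eq0; case: eqP => [->|_]; rewrite ?sub0set ?andbF.
Qed.

Lemma bool_lem N : forall (D : {set T}) k j (b : {set T} -> K),
  #|D| = N -> (2 * k + j <= N)%N ->
  (forall C : {set T}, C \subset D -> #|C| = (k + j)%N ->
     \sum_(A : {set T} | (A \subset C) && (#|A| == k)) b A = 0) ->
  forall A : {set T}, A \subset D -> #|A| = k -> b A = 0.
Proof.
elim: N => [|N IH] D k j b cD hkj hC.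
  case: j hkj hC => [|j] hkj hC; first exact: base_j0.
  by rewrite addnS in hkj.
case: j hkj hC => [|j] hkj hC; first exact: base_j0.
case: k hkj hC => [|k] hkj hC; first by apply: (base_k0 _ hC); rewrite cD; lia.
have : (0 < #|D|)%N by rewrite cD.
case/card_gt0P => d dD.
set D' := D :\ d.
have cD' : #|D'| = N by move: (cardsD1 d D); rewrite dD cD add1n => [[]].
have sD' : D' \subset D by exact: subD1set.
have dD' : d \notin D' by rewrite !inE eqxx.
have h1 : forall A' : {set T}, A' \subset D' -> #|A'| = k -> b (d |: A') = 0.
  apply: (IH D' k j.+2 (fun A' => b (d |: A'))) => //; first lia.
  move=> E sE cE.
  have dE : d \notin E by apply: contra dD'; move/subsetP: sE; apply.
  have hE : forall e, e \in E ->
      \sum_(A : {set T} | (A \subset E :\ e) && (#|A| == k)) b (d |: A) +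
      \sum_(A : {set T} | (A \subset E :\ e) && (#|A| == k.+1)) b A = 0.
    move=> e eE; rewrite -sum_split_pt; last by rewrite !inE negb_and dE orbT.
    apply: hC.
      rewrite subUset sub1set dD /=; apply: subset_trans sD'.
      by apply: subset_trans sE; exact: subD1set.
    rewrite cardsU1 !inE (negbTE dE) andbF /=.
    by move: (cardsD1 e E); rewrite eE cE add1n => h; lia.
  have : \sum_(e in E) (\sum_(A : {set T} | (A \subset E :\ e) && (#|A| == k)) b (d |: A) +
      \sum_(A : {set T} | (A \subset E :\ e) && (#|A| == k.+1)) b A) = 0 by apply: big1.
  rewrite big_split /= !dcount.
  rewrite (hC E) ?mul0rn ?addr0; first last.
  - by rewrite cE; lia.
  - exact: subset_trans sD'.
  rewrite cE (_ : (k + j.+2 - k = (j.+1).+1)%N); last lia.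
  exact: mulrn_S_eq0.
have h2 : forall A : {set T}, A \subset D' -> #|A| = k.+1 -> b A = 0.
  apply: (IH D' k.+1 j b) => //; first lia.
  move=> B sB cB.
  have dB : d \notin B by apply: contra dD'; move/subsetP: sB; apply.
  have := hC (d |: B); rewrite sum_split_pt // big1 ?add0r; first apply.
  - by rewrite subUset sub1set dD /=; apply: subset_trans sD'.
  - by rewrite cardsU1 dB cB; lia.
  - by move=> A' /andP [sA' /eqP cA']; apply: h1 => //; apply: subset_trans sB.
move=> A sA cA; case dA: (d \in A).
  rewrite -(setD1K dA); apply: h1; first exact: setSD.
  by move: (cardsD1 d A); rewrite dA cA add1n => [[<-]].
by apply: h2 => //; rewrite subsetD1 sA dA.
Qed.

End Bool.

Definition indep (V : finType) (G : rel V) (S : {set V}) :=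
  [forall u in S, forall v in S, (u != v) ==> ~~ G u v].

Section Gen.
Variable (K : fieldType) (V : finType) (G : rel V).
Hypothesis K0 : [pchar K] =i pred0.

Lemma indepP (S : {set V}) :
  reflect (forall u v, u \in S -> v \in S -> u != v -> ~~ G u v) (indep G S).
Proof.
apply: (iffP forallP) => [h u v uS vS uv | h u].
  by move: (h u); rewrite uS /= => /forallP /(_ v); rewrite vS uv.
apply/implyP => uS; apply/forallP => v; apply/implyP => vS; apply/implyP; exact: h.
Qed.

Lemma indepS (S1 S2 : {set V}) : S1 \subset S2 -> indep G S2 -> indep G S1.
Proof.
move=> /subsetP s /indepP h; apply/indepP => u v uS vS; apply: h; exact: s.
Qed.

Lemma wlem (Y : {set V}) (p : V -> V) (a : {set V} -> K) (i : nat) :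
  (forall y1 y2, y1 \in Y -> y2 \in Y -> ~~ G y1 y2) ->
  (forall x y, x \notin Y -> y \in Y -> G x y || G y x -> y = p x) ->
  (2 * i < #|Y|)%N ->
  (forall S' : {set V}, indep G S' -> #|S'| = i.+1 -> \sum_(v in S') a (S' :\ v) = 0) ->
  forall S : {set V}, indep G S -> #|S| = i -> a S = 0.
Proof.
move=> hY hP hi ha.
suff: forall t (S : {set V}), indep G S -> #|S| = i -> (#|S :\: Y| < t)%N -> a S = 0.
  by move=> h S iS cS; apply: (h #|S :\: Y|.+1).
elim=> [//|t IH] S iS cS ct.
case: (ltnP #|S :\: Y| t) => [lt|ge]; first exact: IH.
have eqt : #|S :\: Y| = t by apply/eqP; rewrite eqn_leq ge -ltnS ct.
set T0 := S :\: Y. set U := S :&: Y.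
set D := [set y in Y | [forall x in T0, ~~ G x y && ~~ G y x]].
have sDY : D \subset Y by apply/subsetP => y; rewrite inE => /andP [].
have sUD : U \subset D.
  apply/subsetP => u; rewrite !inE => /andP [uS uY]; rewrite uY /=.
  apply/forallP => x; apply/implyP; rewrite !inE => /andP [xY xS].
  have xu : x != u by apply: contraNneq xY => ->.
  have ux : u != x by rewrite eq_sym.
  by move/indepP: iS => iS; rewrite (iS x u xS uS xu) (iS u x uS xS ux).
have cTU : (#|U| + #|T0| = i)%N by rewrite cardsID.
have cD : (#|Y| <= #|D| + #|T0|)%N.
  have sub : Y :\: D \subset p @: T0.
    apply/subsetP => y; rewrite !inE => /andP [yD yY].
    move: yD; rewrite yY /= => /forallPn [z]; rewrite negb_imply => /andP [xT].
    rewrite negb_and !negbK => hxy.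
    move: (xT); rewrite !inE => /andP [zY zS].
    by apply/imsetP; exists z => //; apply: hP.
  have := subset_leq_card sub; have := leq_imset_card p T0.
  rewrite cardsD (setIidPr sDY); lia.
pose b := fun A => a (T0 :|: A).
have hb : b U = 0.
  apply: (@bool_lem K V K0 #|D| D #|U| 1 b) => //; first lia.
  move=> C sC cC.
  have sCY : C \subset Y := subset_trans sC sDY.
  have dTC : T0 :&: C = set0.
    apply/setP => x; rewrite !inE; apply/negbTE; apply/negP => /andP [/andP [xY _] xC].
    by move/subsetP: sCY => /(_ x xC); rewrite (negbTE xY).
  have iS' : indep G (T0 :|: C).
    apply/indepP => u v; rewrite !in_setU => uS vS uv.
    have sT : T0 \subset S by exact: subsetDl.
    case/orP: uS => [uT|uC]; case/orP: vS => [vT|vC].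
    - by move/indepP: iS; apply => //; move/subsetP: sT; apply.
    - move/subsetP: sC => /(_ v vC); rewrite inE => /andP [_ /forallP /(_ u)].
      by rewrite uT /= => /andP [].
    - move/subsetP: sC => /(_ u uC); rewrite inE => /andP [_ /forallP /(_ v)].
      by rewrite vT /= => /andP [].
    - by apply: hY; move/subsetP: sCY; apply.
  have cS' : #|T0 :|: C| = i.+1 by rewrite cardsU dTC cards0 subn0 cC; lia.
  have := ha _ iS' cS'.
  rewrite (eq_bigl (fun v => v \in [predU T0 & C])); last by move=> v; rewrite !inE.
  rewrite bigU /=; last by rewrite -setI_eq0 dTC.
  rewrite big1 ?add0r; last first.
    move=> v vT; apply: IH.
    - by apply: indepS iS'; exact: subD1set.
    - by move: (cardsD1 v (T0 :|: C)); rewrite cS' inE vT => [[]].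
    - have : (T0 :|: C) :\ v :\: Y \subset T0 :\ v.
        apply/subsetP => x; rewrite !inE => /andP [xY /andP [xv /orP [xT|xC]]].
          by rewrite xv xT.
        by move/subsetP: sCY => /(_ x xC); rewrite (negbTE xY).
      move/subset_leq_card; move: (cardsD1 v T0); rewrite vT -/T0 eqt; lia.
  rewrite (eq_bigr (fun v => b (C :\ v))); last first.
    move=> v vC; rewrite /b; congr a.
    have vT : v \notin T0.
      by apply/negP => vT; move/setP: dTC => /(_ v); rewrite in_setI in_set0 vC vT.
    apply/setP => x; rewrite !in_setU !in_setD1.
    by rewrite in_setU; case: eqP => [->|] /=; rewrite ?(negbTE vT).
  by rewrite (@sum_del _ _ b C #|U|) // cC addn1.
by rewrite /b setUC setID in hb.
Qed.

End Gen.

Section Poly.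
Variable (K : fieldType) (m : nat) (G : rel 'I_m).

Definition mono (S : {set 'I_m}) : 'X_{1..m} := [multinom (nat_of_bool (i \in S)) | i < m].

Lemma monoE (S : {set 'I_m}) i : mono S i = (i \in S). Proof. exact: mnmE. Qed.

Lemma mdeg_mono (S : {set 'I_m}) : mdeg (mono S) = #|S|.
Proof.
rewrite mdegE (eq_bigr (fun i => if i \in S then 1%N else 0%N)); last first.
  by move=> i _; rewrite monoE; case: (i \in S).
by rewrite -big_mkcond /= sum1_card.
Qed.

Lemma mono_D1 (S : {set 'I_m}) u : u \in S -> mono S = (U_(u) + mono (S :\ u))%MM.
Proof.
move=> uS; apply/mnmP => i; rewrite mnmDE !monoE mnm1E !inE.
case: (eqVneq i u) => [->|ne]; first by rewrite uS.
by [].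
Qed.

Lemma mono_U1 (S : {set 'I_m}) u : u \notin S -> mono (u |: S) = (U_(u) + mono S)%MM.
Proof.
move=> uS; rewrite (@mono_D1 (u |: S) u) ?setU11 // setU1K //.
Qed.

Lemma coefMX (p : {mpoly K[m]}) e k :
  (p * 'X_[e])@_k = if (e <= k)%MM then p@_(k - e)%MM else 0.
Proof.
case: ifP => h.
  by rewrite -{1}(submK h) addmC mcoeffMX.
apply/eqP; rewrite mcoeff_eq0 (perm_mem (msuppMX p e)); apply/negP.
case/mapP => m' _ ke; move: h; rewrite ke.
by move/negbT/negP; apply; apply/mnm_lepP => i; rewrite mnmDE leq_addr.
Qed.

Lemma X_split (mm e : 'X_{1..m}) : (e <= mm)%MM ->
  'X_[mm] = 'X_[(mm - e)%MM] * 'X_[e] :> {mpoly K[m]}.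
Proof. by move=> h; rewrite -mpolyXD submK. Qed.

Lemma in_ideal0 : in_ideal G (0 : {mpoly K[m]}).
Proof.
exists (fun _ _ => 0); rewrite big1 // => u _; rewrite big1 // => v _; exact: mul0r.
Qed.

Lemma in_idealD (p q : {mpoly K[m]}) : in_ideal G p -> in_ideal G q -> in_ideal G (p + q).
Proof.
case=> cp -> [cq ->]; exists (fun u v => cp u v + cq u v).
rewrite -big_split; apply: eq_bigr => u _; rewrite -big_split; apply: eq_bigr => v _.
by rewrite mulrDl.
Qed.

Lemma in_idealM (r p : {mpoly K[m]}) : in_ideal G p -> in_ideal G (r * p).
Proof.
case=> cp ->; exists (fun u v => r * cp u v).
rewrite mulr_sumr; apply: eq_bigr => u _; rewrite mulr_sumr; apply: eq_bigr => v _.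
by rewrite mulrA.
Qed.

Lemma in_idealN (p : {mpoly K[m]}) : in_ideal G p -> in_ideal G (- p).
Proof. by move=> h; rewrite -mulN1r; apply: in_idealM. Qed.

Lemma in_idealZ c (p : {mpoly K[m]}) : in_ideal G p -> in_ideal G (c *: p).
Proof. by move=> h; rewrite -mul_mpolyC; apply: in_idealM. Qed.

Lemma in_ideal_sum (I : Type) (r : seq I) (P : pred I) (F : I -> {mpoly K[m]}) :
  (forall i, P i -> in_ideal G (F i)) -> in_ideal G (\sum_(i <- r | P i) F i).
Proof.
move=> h; apply: (big_ind (in_ideal G)) => //; [exact: in_ideal0 | exact: in_idealD].
Qed.

Lemma in_ideal_gen u v : (u == v) || G u v -> in_ideal G ('X_u * 'X_v : {mpoly K[m]}).
Proof.
move=> huv; exists (fun a b => if (a == u) && (b == v) then 1 else 0).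
rewrite (bigD1 u) //= (bigD1 v) //= !eqxx /= mul1r.
rewrite big1 ?addr0; last by move=> b /andP [_ /negbTE ->]; rewrite mul0r.
rewrite big1 ?addr0 // => a /negbTE au; rewrite big1 // => b _; by rewrite au mul0r.
Qed.

Lemma ideal_coef (p : {mpoly K[m]}) (S : {set 'I_m}) : in_ideal G p -> indep G S -> p@_(mono S) = 0.
Proof.
case=> c -> iS; rewrite raddf_sum big1 // => u _; rewrite raddf_sum big1 // => v huv.
rewrite -mpolyXD /= coefMX; case: ifP => // /mnm_lepP h; exfalso.
have hu := h u; have hv := h v.
rewrite !mnmDE !mnm1E !monoE in hu hv.
case: (eqVneq u v) => [e|uv].
  by move: hv; rewrite e eqxx; case: (v \in S).
have uS : u \in S by move: hu; rewrite eqxx; case: (u \in S).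
have vS : v \in S by move: hv; rewrite eqxx addn1; case: (v \in S).
rewrite (negbTE uv) /= in huv.
by move/indepP: iS => /(_ u v uS vS uv); rewrite huv.
Qed.

End Poly.

Section Poly2.
Variable (K : fieldType) (m : nat) (G : rel 'I_m).

Lemma X_ideal_sq (mm : 'X_{1..m}) i : (1 < mm i)%N -> in_ideal G ('X_[mm] : {mpoly K[m]}).
Proof.
move=> h; rewrite (@X_split K m mm (U_(i) + U_(i))%MM); last first.
  apply/mnm_lepP => j; rewrite mnmDE mnm1E.
  by case: (eqVneq i j) => [<-|] //=.
by rewrite mpolyXD; apply: in_idealM; apply: in_ideal_gen; rewrite eqxx.
Qed.

Lemma X_ideal_mono (S : {set 'I_m}) : ~~ indep G S -> in_ideal G ('X_[mono S] : {mpoly K[m]}).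
Proof.
move/forallPn => [u]; rewrite negb_imply => /andP [uS /forallPn [v]].
rewrite negb_imply => /andP [vS]; rewrite negb_imply negbK => /andP [uv Guv].
rewrite (@X_split K m (mono S) (U_(u) + U_(v))%MM); last first.
  apply/mnm_lepP => j; rewrite mnmDE !mnm1E monoE.
  case: (eqVneq u j) => [<-|uj]; first by rewrite uS eq_sym (negbTE uv).
  by case: (eqVneq v j) => [<-|vj] //=; rewrite vS.
by rewrite mpolyXD; apply: in_idealM; apply: in_ideal_gen; rewrite Guv orbT.
Qed.

Lemma coef_char (p : {mpoly K[m]}) :
  (forall S, indep G S -> p@_(mono S) = 0) -> in_ideal G p.
Proof.
move=> h; rewrite (mpolyE p); apply: in_ideal_sum => mm _.
case: (boolP [exists i, (1 < mm i)%N]) => [/existsP [i hi]|].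
  by apply: in_idealZ; exact: X_ideal_sq hi.
move/existsPn => hle.
set S := [set i | (0 < mm i)%N].
have mmE : mm = mono S.
  apply/mnmP => i; rewrite monoE inE; move: (hle i).
  by case: (mm i) => [|[|k]].
case: (boolP (indep G S)) => iS.
  by rewrite mmE h // scale0r; exact: in_ideal0.
by apply: in_idealZ; rewrite mmE; apply: X_ideal_mono.
Qed.

Lemma coef_ell (f : {mpoly K[m]}) (S : {set 'I_m}) :
  (ell K m * f)@_(mono S) = \sum_(v in S) f@_(mono (S :\ v)).
Proof.
rewrite /ell mulr_suml raddf_sum /= [RHS]big_mkcond /=; apply: eq_bigr => u _.
rewrite mulrC coefMX.
have -> : (U_(u) <= mono S)%MM = (u \in S).
  apply/mnm_lepP/idP => [/(_ u)|uS j]; first by rewrite mnm1E monoE eqxx; case: (u \in S).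
  rewrite mnm1E monoE; case: (eqVneq u j) => [<-|//]; by rewrite uS.
case: ifP => // uS; congr (_@_ _).
by rewrite (mono_D1 uS) addmC addmK.
Qed.

Lemma inj_gen (Y : {set 'I_m}) (p : 'I_m -> 'I_m) (i : nat) :
  [pchar K] =i pred0 ->
  (forall y1 y2, y1 \in Y -> y2 \in Y -> ~~ G y1 y2) ->
  (forall x y, x \notin Y -> y \in Y -> G x y || G y x -> y = p x) ->
  (2 * i < #|Y|)%N ->
  mult_injective K G i.
Proof.
move=> K0 hY hP hi f hf hI; apply: coef_char => S iS.
case: (eqVneq #|S| i) => cS; last first.
  by apply: (dhomog_nemf_coeff hf); move: cS; rewrite -(mdeg_mono S).
apply: (wlem (a := fun S => f@_(mono S)) K0 hY hP hi) => // S' iS' _.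
by rewrite -(coef_ell f S'); exact: (ideal_coef hI iS').
Qed.

End Poly2.

Section Poly3.
Variable (K : fieldType) (m : nat) (G : rel 'I_m).
Lemma Xu_mono_ideal (u : 'I_m) (F : {set 'I_m}) :
  (u \in F) || [exists w in F, G u w] ->
  in_ideal G ('X_u * 'X_[mono F] : {mpoly K[m]}).
Proof.
have key : forall w, w \in F -> (u == w) || G u w -> in_ideal G ('X_u * 'X_[mono F] : {mpoly K[m]}).
  move=> w wF huw; rewrite (mono_D1 wF) mpolyXD mulrA mulrC.
  by apply: in_idealM; apply: in_ideal_gen.
case/orP => [uF|/existsP [w /andP [wF Guw]]]; first by apply: (key u uF); rewrite eqxx.
by apply: (key w wF); rewrite Guw orbT.
Qed.
End Poly3.

Section W.
Variable (n : nat) (H : rel 'I_n).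

Lemma split_x (i : 'I_n) : split (lshift n i) = inl i.
Proof. exact: (@unsplitK n n (inl i)). Qed.
Lemma split_y (i : 'I_n) : split (rshift n i) = inr i.
Proof. exact: (@unsplitK n n (inr i)). Qed.

Lemma wxx i j : whisker H (lshift n i) (lshift n j) = H i j.
Proof. by rewrite /whisker !split_x. Qed.
Lemma wxy i j : whisker H (lshift n i) (rshift n j) = (i == j).
Proof. by rewrite /whisker split_x split_y. Qed.
Lemma wyx i j : whisker H (rshift n i) (lshift n j) = (i == j).
Proof. by rewrite /whisker split_x split_y. Qed.
Lemma wyy i j : whisker H (rshift n i) (rshift n j) = false.
Proof. by rewrite /whisker !split_y. Qed.

Variant vspec : 'I_(n + n) -> Type :=
  | VX i : vspec (lshift n i)
  | VY i : vspec (rshift n i).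

Lemma vP v : vspec v.
Proof. rewrite -(splitK v); case: (split v) => i; [exact: VX | exact: VY]. Qed.

Definition idx (v : 'I_(n + n)) : 'I_n := match split v with inl i => i | inr i => i end.

Lemma W1 (S : {set 'I_(n + n)}) i : indep (whisker H) S ->
  ~~ ((lshift n i \in S) && (rshift n i \in S)).
Proof.
move=> iS; apply/negP => /andP [xS yS].
by move/indepP: iS => /(_ _ _ xS yS); rewrite eq_lrshift wxy eqxx => /(_ isT).
Qed.

Lemma W2 (S : {set 'I_(n + n)}) i : indep (whisker H) S -> #|S| = n ->
  (lshift n i \in S) || (rshift n i \in S).
Proof.
move=> iS cS.
have inj : {in S &, injective idx}.
  move=> u v; case: (vP u) => a; case: (vP v) => b; rewrite /idx ?split_x ?split_y.
  - by move=> _ _ ->.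
  - by move=> aS bS e; subst b; move: (W1 a iS); rewrite aS bS.
  - by move=> aS bS e; subst b; move: (W1 a iS); rewrite aS bS.
  - by move=> _ _ ->.
have e : idx @: S = setT.
  apply/eqP; rewrite eqEcard subsetT cardsT card_ord card_in_imset // cS leqnn //.
move: (in_setT i); rewrite -e => /imsetP [v vS ->].
by case: (vP v) vS => b bS; rewrite /idx ?split_x ?split_y bS ?orbT.
Qed.

End W.

Section Surj.
Variable (K : fieldType) (n : nat) (H : rel 'I_n).
Variables (i0 j0 : 'I_n).
Hypothesis Hij : H i0 j0.
Hypothesis H_irr : ssrbool.irreflexive H.
Local Notation G := (whisker H).
Local Notation ellK := (ell K (n + n)).

Definition Pn (g : {mpoly K[n + n]}) :=
  exists f : {mpoly K[n + n]}, f \is n.-1.-homog /\ in_ideal G (g - ellK * f).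

Definition cnt (S : {set 'I_(n + n)}) := #|[set i | rshift n i \in S]|.

Lemma S1 : forall (S : {set 'I_(n + n)}), indep G S -> #|S| = n -> Pn 'X_[mono S].
Proof.
suff: forall k (S : {set 'I_(n + n)}), indep G S -> #|S| = n -> (cnt S < k)%N -> Pn 'X_[mono S].
  by move=> h S iS cS; apply: (h (cnt S).+1).
elim=> [//|k IH] S iS cS ck.
have [v yS] : exists v, rshift n v \in S.
  have ij : i0 != j0 by apply/negP => /eqP e; move: Hij; rewrite e H_irr.
  have : ~~ ((lshift n i0 \in S) && (lshift n j0 \in S)).
    apply/negP => /andP [a b]; move/indepP: iS => /(_ _ _ a b).
    by rewrite eq_lshift ij wxx Hij => /(_ isT).
  rewrite negb_and => /orP [] h.
    by exists i0; move: (W2 i0 iS cS); rewrite (negbTE h).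
  by exists j0; move: (W2 j0 iS cS); rewrite (negbTE h).
set F := S :\ rshift n v.
have xF : lshift n v \notin F.
  by rewrite !inE eq_lrshift /=; move: (W1 v iS); rewrite yS andbT.
have hS : mono S = (U_(rshift n v) + mono F)%MM by exact: mono_D1.
have cF : #|F| = n.-1 by have := cardsD1 (rshift n v) S; rewrite yS cS add1n => h; rewrite [in RHS]h.
set XF : {mpoly K[n + n]} := 'X_[mono F].
set R := \sum_(u | (u != rshift n v) && (u != lshift n v)) 'X_u * XF.
have hsum : ellK * XF = 'X_[mono S] + 'X_(lshift n v) * XF + R.
  rewrite /ell mulr_suml (bigD1 (rshift n v)) //= (bigD1 (lshift n v)) /=; last by rewrite eq_lrshift.
  by rewrite addrA /XF -mpolyXD -hS.
have iR : in_ideal G R.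
  apply: in_ideal_sum => u /andP [ur ul]; apply: Xu_mono_ideal.
  case: (vP u) ur ul => w ur ul.
  - have wv : w != v by move: ul; rewrite eq_lshift.
    case/orP: (W2 w iS cS) => h.
      by rewrite !inE h eq_lrshift.
    apply/orP; right; apply/existsP; exists (rshift n w).
    by rewrite !inE h eq_rshift wv wxy eqxx.
  - have wv : w != v by move: ur; rewrite eq_rshift.
    case/orP: (W2 w iS cS) => h; last by rewrite !inE h eq_rshift wv.
    apply/orP; right; apply/existsP; exists (lshift n w).
    by rewrite !inE h eq_lrshift wyx eqxx.
have hXF : XF \is n.-1.-homog by rewrite /XF dhomogX /= mdeg_mono cF.
set S' := lshift n v |: F.
have hX' : 'X_(lshift n v) * XF = 'X_[mono S'] by rewrite /XF -mpolyXD -mono_U1.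
case: (boolP (indep G S')) => iS'; last first.
  exists XF; split => //.
  have -> : 'X_[mono S] - ellK * XF = - ('X_(lshift n v) * XF) + - R.
    by rewrite hsum; ring.
  apply: in_idealD; apply: in_idealN => //; rewrite hX'; exact: X_ideal_mono.
have cS' : #|S'| = n.
  rewrite cardsU1 xF cF; case: n i0 => [[]|] //.
have ck' : (cnt S' < k)%N.
  have e : [set i | rshift n i \in S'] = [set i | rshift n i \in S] :\ v.
    apply/setP => i; rewrite !inE eq_rlshift eq_rshift /=.
    by case: (i == v).
  move: ck; rewrite /cnt e; move: (cardsD1 v [set i | rshift n i \in S]).
  rewrite inE yS; lia.
have [f' [hf' hI']] := IH S' iS' cS' ck'.
exists (XF - f'); split; first by rewrite rpredB.
have -> : 'X_[mono S] - ellK * (XF - f') =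
          - ('X_(lshift n v) * XF - ellK * f') + - R.
  by rewrite mulrBr hsum; ring.
by apply: in_idealD; apply: in_idealN => //; rewrite hX'.
Qed.

End Surj.

Theorem corollary3p2 (K : fieldType) (n : nat) (H : rel 'I_n)
    (H_sym : ssrbool.symmetric H) (H_irr : ssrbool.irreflexive H)
    (K_char0 : [pchar K]%R =i pred0)
    (hE : (n.+1 <= edge_count (whisker H))%N) :
  (forall i : nat, (2 * i < n)%N ->
     maximal_rank K (whisker H) i /\ mult_injective K (whisker H) i)
  /\ maximal_rank K (whisker H) n.-1.
Proof.
have [i0 [j0 Hij]] : exists i0 j0, H i0 j0.
  case: (boolP [exists i, exists j, H i j]) => [/existsP [i /existsP [j h]]|hno].
    by exists i, j.
  exfalso.
  have sub : [set e : 'I_(n + n) * 'I_(n + n) | (e.1 < e.2)%N && whisker H e.1 e.2]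
      \subset [set (lshift n i, rshift n i) | i : 'I_n].
    apply/subsetP => [[a b]]; rewrite inE /= => /andP [].
    case: (vP a) => i; case: (vP b) => j /= ab.
    - rewrite wxx => h; move/existsPn: hno => /(_ i) /existsPn /(_ j).
      by rewrite h.
    - by rewrite wxy => /eqP <-; apply/imsetP; exists i.
    - by move: ab; have := ltn_ord j; lia.
    - by rewrite wyy.
  have := subset_leq_card sub; have := leq_imset_card (fun i : 'I_n => (lshift n i, rshift n i)) 'I_n.
  move: hE; rewrite /edge_count card_ord => h1 h2 h3.
  by move: (leq_trans h3 h2); rewrite leqNgt h1.
have n0 : (0 < n)%N by apply: leq_ltn_trans (ltn_ord i0).
split.
  move=> i hi.
  have inj : mult_injective K (whisker H) i.
    apply: (inj_gen (Y := [set rshift n j | j : 'I_n]) (p := fun x => rshift n (idx x))) => //.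
    - by move=> y1 y2 /imsetP [a _ ->] /imsetP [b _ ->]; rewrite wyy.
    - move=> x y; case: (vP x) => a; last first.
        by move/negP => nY; exfalso; apply: nY; apply/imsetP; exists a.
      move=> _ /imsetP [b _ ->]; rewrite wxy wyx /idx split_x => h.
      have : a == b by move: h; rewrite [b == a]eq_sym orbb.
      by move/eqP ->.
    - by rewrite card_imset ?card_ord //; exact: rshift_inj.
  by split => //; left.
right => g hg.
rewrite prednK // in hg.
have P0 : Pn (K:=K) H 0 by exists 0; rewrite dhomog0 mulr0 subr0; split => //; exact: in_ideal0.
have PD : forall g1 g2, Pn (K:=K) H g1 -> Pn (K:=K) H g2 -> Pn (K:=K) H (g1 + g2).
  move=> g1 g2 [f1 [h1 i1]] [f2 [h2 i2]]; exists (f1 + f2); split; first by rewrite rpredD.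
  have -> : g1 + g2 - ell K (n + n) * (f1 + f2) =
            (g1 - ell K (n + n) * f1) + (g2 - ell K (n + n) * f2) by ring.
  exact: in_idealD.
have PZ : forall c g1, Pn (K:=K) H g1 -> Pn (K:=K) H (c *: g1).
  move=> c g1 [f1 [h1 i1]]; exists (c *: f1); split; first by rewrite rpredZ.
  have -> : c *: g1 - ell K (n + n) * (c *: f1) = c *: (g1 - ell K (n + n) * f1).
    by rewrite scalerBr scalerAr.
  exact: in_idealZ.
have PX : forall mm : 'X_{1..n + n}, mdeg mm = n -> Pn (K:=K) H 'X_[mm].
  move=> mm dm.
  have PI : in_ideal (whisker H) ('X_[mm] : {mpoly K[n + n]}) -> Pn (K:=K) H 'X_[mm].
    by move=> h; exists 0; rewrite dhomog0 mulr0 subr0.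
  case: (boolP [exists i, (1 < mm i)%N]) => [/existsP [i hi]|].
    by apply: PI; exact: X_ideal_sq hi.
  move/existsPn => hle.
  set S := [set i | (0 < mm i)%N].
  have mmE : mm = mono S.
    apply/mnmP => i; rewrite monoE inE; move: (hle i).
    by case: (mm i) => [|[|k]].
  case: (boolP (indep (whisker H) S)) => iS; last by apply: PI; rewrite mmE; apply: X_ideal_mono.
  rewrite mmE; apply: (S1 K Hij H_irr iS).
  by rewrite -mdeg_mono -mmE.
rewrite (mpolyE g) big_seq; apply: (big_ind (Pn (K:=K) H)) => // mm hmm.
apply: PZ; apply: PX.
by move/dhomogP: hg => /(_ mm hmm).
Qed.
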